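(* Let $R$ be the ring of integers in a totally real number field. Then the homomorphism $O_n(R)\to\mathrm{Aut}(X(\mathbb E^n_R))$ coming from the action of $O_n(R)$ on the Stiefel complex $X(\mathbb E^n_R)$ is an isomorphism of groups.
   Context: A number field $K$ is totally real if every embedding $K\hookrightarrow\mathbb C$ has image in $\mathbb R$. $\mathbb E^n_R=(R^n,q)$ with $q(x)=x_1^2+\dots+x_n^2$ and $B_q(x,y)=q(x+y)-q(x)-q(y)$; $O_n(R)$ is the group of $R$-linear automorphisms of $R^n$ preserving $q$. The Stiefel complex $X(\mathbb E^n_R)$ is the simplicial complex whose vertices are the unit vectors $v$ ($q(v)=1$), with $v_1,\dots,v_k$ spanning a simplex iff $B_q(v_i,v_j)=0$ for $i\neq j$. $\mathrm{Aut}(X(\mathbb E^n_R))$ is its group of simplicial automorphisms. *)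

(* Defs.v *)
From HB Require Import structures.
From mathcomp Require Import all_boot all_order all_algebra all_field.
From Stdlib Require Lists.List.
Set Implicit Arguments. Unset Strict Implicit. Unset Printing Implicit Defensive.
Import Order.TTheory GRing.Theory Num.Theory.
Local Open Scope ring_scope.

(* Totally real: every embedding K -> C (equivalently into the algebraic
   numbers algC, which contain every image of K) lands in the reals. *)
Definition totally_real (K : fieldExtType rat) : Prop :=
  forall (f : {rmorphism K -> algC}) (x : K), f x \is Num.real.

Definition in_OK (K : fieldExtType rat) (x : K) : Prop :=
  integralOver (fun z : int => z%:~R : K) x.

Definition int_vec (K : fieldExtType rat) (n : nat) (v : 'cV[K]_n) : Prop :=
  forall i, in_OK (v i 0).

Definition qform (K : fieldExtType rat) (n : nat) (v : 'cV[K]_n) : K :=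
  \sum_(i < n) (v i 0) ^+ 2.

Definition Bq (K : fieldExtType rat) (n : nat) (v w : 'cV[K]_n) : K :=
  qform (v + w) - qform v - qform w.

Definition is_vertex (K : fieldExtType rat) (n : nat) (v : 'cV[K]_n) : Prop :=
  int_vec v /\ qform v = 1.

Definition vertex (K : fieldExtType rat) (n : nat) :=
  {v : 'cV[K]_n | is_vertex v}.

Definition is_simplex (K : fieldExtType rat) (n : nat) (s : seq (vertex K n)) : Prop :=
  forall x y, List.In x s -> List.In y s -> x <> y -> Bq (proj1_sig x) (proj1_sig y) = 0.

Definition is_simplicial_aut (K : fieldExtType rat) (n : nat)
  (f : vertex K n -> vertex K n) : Prop :=
  bijective f /\ forall s : seq (vertex K n), is_simplex s <-> is_simplex (map f s).

(* O_n(R): R-linear automorphisms of R^n (matrices with entries in R whose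
   inverse also has entries in R) preserving q *)
Definition in_On (K : fieldExtType rat) (n : nat) (M : 'M[K]_n) : Prop :=
  [/\ forall i j, in_OK (M i j),
      M \in unitmx,
      forall i j, in_OK (invmx M i j)
    & forall v : 'cV[K]_n, int_vec v -> qform (M *m v) = qform v].

(* Main.v *)
Require Import Defs.
From HB Require Import structures.
From mathcomp Require Import all_boot all_order all_algebra all_field.
From mathcomp Require Import ring.
From Stdlib Require Import ProofIrrelevance.
Import Order.TTheory GRing.Theory Num.Theory.
Local Open Scope ring_scope.

Section Aux.
Set Implicit Arguments. Unset Strict Implicit. Unset Printing Implicit Defensive.

Lemma algC_conj_trans (a z : algC) : root (minCpoly a) z ->
  exists nu : {rmorphism algC -> algC}, nu a = z.
Proof.
move=> rz.
have [pa [Dpa mon_pa] Hpa] := minCpolyP a.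
have [r Dr] := closed_field_poly_normal (minCpoly a).
rewrite (monicP (minCpoly_monic a)) scale1r in Dr.
have ar : a \in r by rewrite -root_prod_XsubC -Dr root_minCpoly.
have zr : z \in r by rewrite -root_prod_XsubC -Dr.
have [Qs [QsC [s1 Ds1 gen1]]] := num_field_exists r.
have [a' a's1 Da'] : exists2 a', a' \in s1 & QsC a' = a.
  by move: ar; rewrite -Ds1 => /mapP[a' ? ->]; exists a'.
have [z' z's1 Dz'] : exists2 z', z' \in s1 & QsC z' = z.
  by move: zr; rewrite -Ds1 => /mapP[z' ? ->]; exists z'.
have QsCpoly (q : {poly rat}) : map_poly QsC (map_poly (in_alg Qs) q) = map_poly ratr q.
  rewrite -map_poly_comp; apply: eq_map_poly => c.
  by rewrite /= rmorphZ_num rmorph1 mulr1.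
pose pq := map_poly (in_alg Qs) pa.
have pqOver : pq \is a polyOver 1%VS by apply/polyOver1P; exists pa.
have Dpq : pq = \prod_(x <- s1) ('X - x%:P).
  apply: (map_poly_inj QsC); rewrite QsCpoly -Dpa Dr -Ds1 rmorph_prod big_map.
  by apply: eq_bigr => x _; rewrite /= map_polyXsubC.
have [m Dm] : exists m, minPoly 1 a' = map_poly (in_alg Qs) m.
  by apply/polyOver1P; apply: minPolyOver.
have rz' : root (minPoly 1 a') z'.
  have : root (map_poly ratr m) a.
    by rewrite -QsCpoly -Dm -Da' rmorph_root // root_minPoly.
  rewrite Hpa => /dvdpP[c Dc].
  rewrite Dm -(fmorph_root QsC) QsCpoly Dz' Dc rmorphM /= rootM.
  by rewrite -Dpa rz orbT.
have id1 : map_poly \1%VF (minPoly 1 a') = minPoly 1 a'.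
  by apply: map_poly_id => c _; rewrite lfunE.
have rz1 : root (map_poly \1%VF (minPoly 1%AS a')) z' by rewrite id1.
have homh := kHomExtendP (subvv (1%AS : {subfield Qs})) (kHom1 1 1) rz1.
have hval := kHomExtend_val (kHom1 (1%AS : {subfield Qs}) 1) rz1.
have split1 : splittingFieldFor <<1%AS; a'>>%AS pq fullv.
  exists s1; first by rewrite Dpq eqpxx.
  apply/eqP; rewrite eqEsubv subvf /= -{1}gen1 adjoin_seqSl //.
  exact: sub1v.
have [g homg Dg] := kHom_extends (sub1v _) homh pqOver split1.
have gM : monoid_morphism g by apply/kHom_monoid_morphism.
pose gmM := GRing.isMonoidMorphism.Build _ _ (fun_of_lfun g) gM.
pose phi : {rmorphism Qs -> Qs} := HB.pack (fun_of_lfun g) gmM.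
have [nu Dnu] := extend_algC_subfield_aut QsC phi.
exists nu; rewrite -Da' -Dnu /= -Dg ?hval //.
exact: memv_adjoin.
Qed.

Lemma Aint_01 (a : algC) : a \in Aint -> a != 0 ->
  (forall nu : {rmorphism algC -> algC}, 0 <= nu a <= 1) -> a = 1.
Proof.
move=> Aa nza Hnu.
have [r Dr] := closed_field_poly_normal (minCpoly a).
rewrite (monicP (minCpoly_monic a)) scale1r in Dr.
have ar : a \in r by rewrite -root_prod_XsubC -Dr root_minCpoly.
have Hr z : z \in r -> 0 < z <= 1.
  move=> zr; have [nu <-] : exists nu : {rmorphism algC -> algC}, nu a = z.
    by apply: algC_conj_trans; rewrite Dr root_prod_XsubC.
  by have /andP[h1 ->] := Hnu nu; rewrite lt_def fmorph_eq0 nza h1.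
pose P := \prod_(z <- r) z.
have P0 : (minCpoly a)`_0 = (-1) ^+ size r * P.
  rewrite -horner_coef0 Dr horner_prod /P.
  elim: (r) => [|z s IH]; first by rewrite !big_nil expr0 mulr1.
  rewrite !big_cons IH hornerXsubC /= exprS sub0r; ring.
have Pint : P \is a Num.int.
  have : (minCpoly a)`_0 \is a Num.int by move: Aa => /polyOverP; apply.
  rewrite P0 => h.
  have -> : P = (-1) ^+ size r * ((-1) ^+ size r * P).
    by rewrite mulrA -exprMn mulrNN mulr1 expr1n mul1r.
  by rewrite rpredM // rpredX // rpredN1.
have Ppos : 0 < P by rewrite /P big_seq prodr_gt0 // => z /Hr /andP[].
have P1 : P = 1.
  apply/le_anti/andP; split.
    by rewrite /P big_seq prodr_ile1 // => z /Hr /andP[/ltW -> ->].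
  have := norm_intr_ge1 Pint (negbT (gt_eqF Ppos)).
  by rewrite ger0_norm // (ltW Ppos).
have : P = a * \prod_(z <- rem a r) z by rewrite /P (big_rem a ar).
rewrite P1 => Da.
have ha := Hnu idfun; rewrite /= in ha.
apply/le_anti/andP; split; first by case/andP: ha.
have h2 : \prod_(z <- rem a r) z <= 1.
  rewrite big_seq prodr_ile1 // => z /mem_rem /Hr /andP[/ltW -> ->] //.
have ha0 : 0 <= a by case/andP: (Hnu idfun).
by have := ler_wpM2l ha0 h2; rewrite mulr1 -Da.
Qed.

Lemma exists_embedding (K : fieldExtType rat) :
  exists g : {rmorphism K -> algC}, True.
Proof.
have pK : [pchar K] =i pred0 by move=> p; rewrite pchar_lalg pchar_num.
have sep : separable 1 {:K}.
  by apply/separableP => y _; apply: pcharf0_separable.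
set th := separable_generator 1 {:K}.
have Dth : {:K}%VS = <<1; th>>%VS.
  exact: (eq_adjoin_separable_generator sep (subvf _)).
have [m Dm] : exists m, minPoly 1 th = map_poly (in_alg K) m.
  by apply/polyOver1P; apply: minPolyOver.
have szm : size (map_poly ratr m : {poly algC}) != 1%N.
  have := size_minPoly 1 th; rewrite Dm !size_map_poly => ->.
  by rewrite /adjoin_degree.
have [w rw] := closed_rootP _ szm.
have key q : (map_poly (in_alg K) q).[th] = 0 -> (map_poly ratr q : {poly algC}).[w] = 0.
  move=> hq; have : minPoly 1 th %| map_poly (in_alg K) q.
    by apply: minPoly_dvdp; [apply/polyOver1P; exists q | apply/rootP].
  rewrite Dm dvdp_map => /dvdpP[c ->].
  by rewrite rmorphM hornerM (rootP rw) mulr0.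
have rep x : exists q, (map_poly (in_alg K) q).[th] = x.
  have xin : x \in <<1; th>>%VS by rewrite -Dth memvf.
  have [q Dq] : exists q, Fadjoin_poly 1 th x = map_poly (in_alg K) q.
    by apply/polyOver1P; apply: Fadjoin_polyOver.
  by exists q; rewrite -Dq Fadjoin_poly_eq.
have repb x : exists q, (map_poly (in_alg K) q).[th] == x.
  by have [q Dq] := rep x; exists q; apply/eqP.
pose gf x := (map_poly ratr (xchoose (repb x)) : {poly algC}).[w].
have gfE q : gf (map_poly (in_alg K) q).[th] = (map_poly ratr q : {poly algC}).[w].
  rewrite /gf; set x := (map_poly _ q).[th].
  have := xchooseP (repb x); set q' := xchoose _ => /eqP Dq'.
  have := key (q' - q); rewrite !rmorphB /= !hornerE Dq' subrr => /(_ erefl).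
  by move/eqP; rewrite subr_eq0 => /eqP.
have gA : zmod_morphism gf.
  move=> x y; have [qx <-] := rep x; have [qy <-] := rep y.
  have -> : (map_poly (in_alg K) qx).[th] - (map_poly (in_alg K) qy).[th]
    = (map_poly (in_alg K) (qx - qy)).[th] by rewrite rmorphB /= !hornerE.
  by rewrite !gfE rmorphB /= !hornerE.
have gM : monoid_morphism gf.
  split.
    have -> : (1 : K) = (map_poly (in_alg K) 1).[th] by rewrite rmorph1 hornerC.
    by rewrite gfE rmorph1 hornerC.
  move=> x y; have [qx <-] := rep x; have [qy <-] := rep y.
  have -> : (map_poly (in_alg K) qx).[th] * (map_poly (in_alg K) qy).[th]
    = (map_poly (in_alg K) (qx * qy)).[th] by rewrite rmorphM /= !hornerE.
  by rewrite !gfE rmorphM /= !hornerE.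
pose gaM := GRing.isZmodMorphism.Build _ _ gf gA.
pose gmM := GRing.isMonoidMorphism.Build _ _ gf gM.
pose g : {rmorphism K -> algC} := HB.pack gf gaM gmM.
by exists g.
Qed.

Lemma in_OK_Aint (K : fieldExtType rat) (g : {rmorphism K -> algC}) x :
  in_OK x -> g x \in Aint.
Proof.
case=> p mon_p rp.
apply: (@root_monic_Aint (map_poly intr p)).
- have -> : map_poly intr p = map_poly g (map_poly (fun z : int => z%:~R : K) p).
    by rewrite -map_poly_comp; apply: eq_map_poly => z /=; rewrite rmorph_int.
  by rewrite rmorph_root.
- exact: monic_map.
- by apply/polyOverP => i; rewrite coef_map /= rpred_int.
Qed.

Lemma sum_le_one (R : numDomainType) n (b : 'I_n -> R) i :
  (forall j, 0 <= b j) -> \sum_j b j = 1 -> b i <= 1.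
Proof.
move=> b0 s1; rewrite -s1 (bigD1 i) //= lerDl.
by apply: sumr_ge0 => j _.
Qed.

Lemma sum_other_zero (R : numDomainType) n (b : 'I_n -> R) i j :
  (forall j, 0 <= b j) -> \sum_j b j = 1 -> b i = 1 -> j != i -> b j = 0.
Proof.
move=> b0 s1 bi ji; move: s1; rewrite (bigD1 i) //= bi (bigD1 j) //=.
rewrite -[RHS]addr0 => /addrI /eqP; rewrite addr_eq0 => /eqP Bj.
apply/le_anti; rewrite (b0 j) andbT {1}Bj oppr_le0.
by apply: sumr_ge0.
Qed.

Lemma vertex_class (K : fieldExtType rat) (n : nat) : totally_real K ->
  forall v : 'cV[K]_n, is_vertex v ->
  exists i : 'I_n, exists s : K, (s = 1 \/ s = -1) /\ v = s *: delta_mx i 0.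
Proof.
move=> tr v [iv qv]; have [g _] := exists_embedding K.
pose a i := g (v i 0) ^+ 2.
have nuge0 (nu : {rmorphism algC -> algC}) i : 0 <= nu (a i).
  by rewrite /a rmorphXn -realEsqr; exact: (tr (nu \o g)).
have nusum (nu : {rmorphism algC -> algC}) : \sum_i nu (a i) = 1.
  rewrite /a -rmorph_sum.
  have -> : \sum_i g (v i 0) ^+ 2 = g (qform v) by rewrite /qform rmorph_sum; apply: eq_bigr => i _; rewrite rmorphXn.
  by rewrite qv !rmorph1.
have a01 i : a i = 0 \/ a i = 1.
  have [->|nz] := eqVneq (a i) 0; [by left | right].
  apply: Aint_01 => // [|nu]; first by rewrite /a rpredX // in_OK_Aint.
  by rewrite nuge0 (sum_le_one _ (nuge0 nu) (nusum nu)).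
have [i0 ai0] : exists i0, a i0 = 1.
  case: (pickP (fun i => a i == 1)) => [i0 /eqP h|h]; first by exists i0.
  have := nusum idfun; rewrite big1 => [/esym/eqP|i _] /=.
    by rewrite oner_eq0.
  by case: (a01 i) => // /eqP; rewrite h.
have aj0 j : j != i0 -> a j = 0.
  exact: (sum_other_zero (nuge0 idfun) (nusum idfun)).
have vj0 j : j != i0 -> v j 0 = 0.
  by move/aj0/eqP; rewrite /a expf_eq0 /= fmorph_eq0 => /eqP.
have vi0 : v i0 0 = 1 \/ v i0 0 = -1.
  move: ai0 => /eqP; rewrite /a sqrf_eq1 -(rmorph1 g) -rmorphN.
  by case/orP => /eqP/fmorph_inj ->; [left|right].
exists i0, (v i0 0); split => //.
apply/matrixP => i j; rewrite (ord1 j) !mxE /= eqxx andbT.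
have [->|ne] := eqVneq i i0; first by rewrite mulr1.
by rewrite mulr0 vj0.
Qed.

End Aux.

Lemma vertex_eq (K : fieldExtType rat) (n : nat) (x y : vertex K n) :
  proj1_sig x = proj1_sig y -> x = y.
Proof.
case: x => x px; case: y => y py /= exy; subst y.
by rewrite (proof_irrelevance _ px py).
Qed.

Section OK.
Variable K : fieldExtType rat.
Let intK : {rmorphism int -> K} := intr.

Lemma in_OK_add (x y : K) : in_OK x -> in_OK y -> in_OK (x + y).
Proof. exact: (@integral_add _ _ intK). Qed.
Lemma in_OK_mul (x y : K) : in_OK x -> in_OK y -> in_OK (x * y).
Proof. exact: (@integral_mul _ _ intK). Qed.
Lemma in_OK_opp (x : K) : in_OK x -> in_OK (- x).
Proof. exact: (@integral_opp _ _ intK). Qed.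
Lemma in_OK_nat (m : nat) : in_OK (m%:R : K).
Proof. exact: (@integral_nat _ _ intK). Qed.
Lemma in_OK_sum I (r : seq I) (P : pred I) (F : I -> K) :
  (forall i, P i -> in_OK (F i)) -> in_OK (\sum_(i <- r | P i) F i).
Proof.
move=> h; apply: (big_ind (@in_OK K)) => //; first exact: (in_OK_nat 0).
exact: in_OK_add.
Qed.
End OK.

Lemma int_vec_mul (K : fieldExtType rat) n (M : 'M[K]_n) v :
  (forall i j, in_OK (M i j)) -> int_vec v -> int_vec (M *m v).
Proof.
move=> hM hv i; rewrite mxE; apply: in_OK_sum => j _; exact: in_OK_mul.
Qed.

Lemma int_vec_add (K : fieldExtType rat) n (v w : 'cV[K]_n) :
  int_vec v -> int_vec w -> int_vec (v + w).
Proof. by move=> hv hw i; rewrite mxE; apply: in_OK_add. Qed.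

Lemma qform_tr (K : fieldExtType rat) n (v : 'cV[K]_n) : qform v = (v^T *m v) 0 0.
Proof. by rewrite /qform mxE; apply: eq_bigr => i _; rewrite mxE expr2. Qed.

Lemma Bq_dot (K : fieldExtType rat) n (v w : 'cV[K]_n) :
  Bq v w = 2%:R * \sum_i v i 0 * w i 0.
Proof.
rewrite /Bq /qform -!sumrB mulr_sumr; apply: eq_bigr => i _.
rewrite mxE; ring.
Qed.

Lemma In_map (A B : Type) (f : A -> B) (s : seq A) (x : B) :
  List.In x (map f s) <-> exists a, f a = x /\ List.In a s.
Proof.
elim: s x => [|a s IH] x /=; first by split => [[]|[? [_ []]]].
split.
  case=> [<-|/IH[b [<- hb]]]; first by exists a; split => //; left.
  by exists b; split => //; right.
case=> b [<- [->|hb]]; first by left.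
by right; apply/IH; exists b.
Qed.

Lemma simplex_map (K : fieldExtType rat) n (f : vertex K n -> vertex K n) :
  injective f ->
  (forall a b, Bq (proj1_sig (f a)) (proj1_sig (f b)) = Bq (proj1_sig a) (proj1_sig b)) ->
  forall s, is_simplex s <-> is_simplex (map f s).
Proof.
move=> finj fB s; split.
  move=> hs x y /In_map[a [<- ha]] /In_map[b [<- hb]] nab.
  rewrite fB; apply: hs => // eab; apply: nab; by rewrite eab.
move=> hs a b ha hb nab; rewrite -fB; apply: hs.
- by apply/In_map; exists a.
- by apply/In_map; exists b.
- by move/finj.
Qed.

Lemma part1 (K : fieldExtType rat) n (M : 'M[K]_n) : in_On M ->
  exists f : vertex K n -> vertex K n,
    (forall v, proj1_sig (f v) = M *m proj1_sig v) /\ is_simplicial_aut f.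
Proof.
case=> hM uM hiM hq.
have vM (v : vertex K n) : is_vertex (M *m proj1_sig v).
  case: v => v [iv qv] /=; split; first exact: int_vec_mul.
  by rewrite hq.
have viM (v : vertex K n) : is_vertex (invmx M *m proj1_sig v).
  case: v => v [iv qv] /=; have iv' := @int_vec_mul _ _ _ _ hiM iv; split => //.
  by rewrite -hq // mulmxA mulmxV // mul1mx.
pose f v : vertex K n := exist _ _ (vM v).
pose g v : vertex K n := exist _ _ (viM v).
have fg : cancel f g by move=> v; apply: vertex_eq => /=; rewrite mulmxA mulVmx // mul1mx.
have gf : cancel g f by move=> v; apply: vertex_eq => /=; rewrite mulmxA mulmxV // mul1mx.
exists f; split => //; split; first by exists g.
apply: simplex_map; first exact: can_inj fg.
move=> [a [ia qa]] [b [ib qb]] /=.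
by rewrite /Bq -mulmxDr !hq //; apply: int_vec_add.
Qed.

Lemma two_neq0 (K : fieldExtType rat) : (2%:R : K) != 0.
Proof.
have pK : [pchar K] =i pred0 by move=> p; rewrite pchar_lalg pchar_num.
by have /pcharf0P -> := pK.
Qed.

Lemma one_neq_m1 (K : fieldExtType rat) : (1 : K) != -1.
Proof.
apply/eqP => h; have := two_neq0 K; rewrite mulr2n {1}h addNr eqxx //.
Qed.

Lemma delta_vertex (K : fieldExtType rat) n (i : 'I_n) (s : K) :
  s = 1 \/ s = -1 -> is_vertex (s *: delta_mx i 0).
Proof.
move=> hs; have s2 : s ^+ 2 = 1 by case: hs => ->; rewrite ?expr1n ?sqrrN ?expr1n.
split.
  move=> j; rewrite !mxE; apply: in_OK_mul; last exact: in_OK_nat.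
  by case: hs => ->; [exact: (in_OK_nat _ 1) | apply: in_OK_opp; exact: (in_OK_nat _ 1)].
rewrite /qform (bigD1 i) //= big1 => [|j ji]; rewrite !mxE ?eqxx /=.
  by rewrite mulr1 s2 addr0.
by rewrite (negbTE ji) mulr0 expr0n.
Qed.

Lemma Bq_delta (K : fieldExtType rat) n (i j : 'I_n) (s t : K) :
  Bq (s *: delta_mx i 0) (t *: delta_mx j 0) = 2%:R * (s * t * (i == j)%:R).
Proof.
rewrite Bq_dot (bigD1 i) //= big1 => [|k ki]; rewrite !mxE ?eqxx /=.
  by rewrite andbT addr0 mulr1 !mulrA.
by rewrite (negbTE ki) mulr0 mul0r.
Qed.

Lemma Bq_sym (K : fieldExtType rat) n (v w : 'cV[K]_n) : Bq v w = Bq w v.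
Proof. by rewrite !Bq_dot; congr (_ * _); apply: eq_bigr => i _; rewrite mulrC. Qed.

Lemma simplex2 (K : fieldExtType rat) n (x y : vertex K n) : x <> y ->
  (is_simplex [:: x; y] <-> Bq (proj1_sig x) (proj1_sig y) = 0).
Proof.
move=> nxy; split.
  by move=> hs; apply: hs => //=; [left | right; left].
move=> h a b /= ha hb.
case: ha => [<-|[<-|[]]]; case: hb => [<-|[<-|[]]] // nab; try (by case: nab).
by rewrite Bq_sym.
Qed.

Arguments delta_vertex {K n} i {s}.
Arguments simplex2 {K n x y}.
Lemma part2 (K : fieldExtType rat) n (M1 M2 : 'M[K]_n) :
  (forall v : vertex K n, M1 *m proj1_sig v = M2 *m proj1_sig v) -> M1 = M2.
Proof.
move=> H; apply/matrixP => i j.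
have := H (exist _ _ (delta_vertex j (or_introl erefl))).
rewrite /= scale1r -!colE => /(congr1 (fun c : 'cV[K]_n => c i 0)).
by rewrite !mxE.
Qed.



Arguments vertex_class {K n} tr {v}.
Lemma part3 (K : fieldExtType rat) n : totally_real K ->
  forall f : vertex K n -> vertex K n, is_simplicial_aut f ->
  exists M : 'M[K]_n, in_On M /\ forall v, proj1_sig (f v) = M *m proj1_sig v.
Proof.
move=> tr f [fbij fs]; have finj := bij_inj fbij.
pose ev i : vertex K n := exist _ _ (delta_vertex i (or_introl erefl)).
pose nev i : vertex K n := exist _ _ (delta_vertex i (or_intror erefl)).
pose u i := proj1_sig (f (ev i)).
have fneg i : proj1_sig (f (nev i)) = - u i.
  have ne : ev i <> nev i.
    move=> /(congr1 (fun v : vertex K n => proj1_sig v i 0)) /=; rewrite !mxE eqxx /= !mulr1.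
    by move/eqP; rewrite (negbTE (one_neq_m1 K)).
  have fne : f (ev i) <> f (nev i) by move/finj.
  have Bne : Bq (u i) (proj1_sig (f (nev i))) <> 0.
    move=> h0; have := proj2 (simplex2 fne) h0.
    have := fs [:: ev i; nev i]; rewrite /= => <-; rewrite (simplex2 ne) /=.
    rewrite Bq_delta eqxx mulr1 mul1r mulrN1 => /eqP.
    by rewrite oppr_eq0 (negbTE (two_neq0 K)).
  have [k [s [hs Ds]]] := vertex_class tr (proj2_sig (f (ev i))).
  have [l [t [ht Dt]]] := vertex_class tr (proj2_sig (f (nev i))).
  have [ekl|kl] := eqVneq k l; last first.
    by move: Bne; rewrite /u Ds Dt Bq_delta (negbTE kl) /= !mulr0.
  subst l; rewrite Dt /u Ds -scaleNr; congr (_ *: _).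
  case: hs ht Ds Dt => -> [] -> Ds Dt; rewrite ?opprK //; exfalso; apply: fne;
    by apply: vertex_eq; rewrite Ds Dt.
pose M := \matrix_(j, i) u i j 0.
have colM i : M *m delta_mx i 0 = u i.
  by rewrite -colE; apply/matrixP => j k; rewrite (ord1 k) !mxE.
have hv v : proj1_sig (f v) = M *m proj1_sig v.
  have [i [s [hs Dv]]] := vertex_class tr (proj2_sig v).
  case: hs Dv => -> Dv.
    have -> : v = ev i by apply: vertex_eq.
    by rewrite /= scale1r colM.
  have -> : v = nev i by apply: vertex_eq.
  by rewrite fneg /= scaleN1r mulmxN colM.
have uv i : is_vertex (u i) := proj2_sig (f (ev i)).
have MtM : M^T *m M = 1%:M.
  apply/matrixP => i j; rewrite !mxE.
  have -> : \sum_k M^T i k * M k j = \sum_k u i k 0 * u j k 0.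
    by apply: eq_bigr => k _; rewrite !mxE.
  have [<-|nij] := eqVneq i j.
    rewrite /=; have [_ <-] := uv i; rewrite /qform.
    by apply: eq_bigr => k _; rewrite expr2.
  rewrite /=.
  have ne : ev i <> ev j.
    move=> /(congr1 (fun v : vertex K n => proj1_sig v i 0)) /=; rewrite !mxE eqxx /= !mul1r.
    by rewrite (negbTE nij) => /eqP; rewrite oner_eq0.
  have fne : f (ev i) <> f (ev j) by move/finj.
  have := proj2 (simplex2 ne); rewrite /= Bq_delta (negbTE nij) !mulr0 => /(_ erefl).
  have := fs [:: ev i; ev j]; rewrite /= => -> /(simplex2 fne) /eqP.
  by rewrite Bq_dot mulf_eq0 (negbTE (two_neq0 K)) /= => /eqP.
have uM : M \in unitmx := (mulmx1_unit MtM).2.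
have iM : invmx M = M^T.
  by rewrite -[invmx M]mul1mx -MtM -mulmxA mulmxV // mulmx1.
have hM i j : in_OK (M i j) by rewrite mxE; have [+ _] := uv j; apply.
exists M; split => //; split => //.
  by move=> i j; rewrite iM mxE.
move=> v _; rewrite !qform_tr trmx_mul -mulmxA (mulmxA M^T) MtM mul1mx //.
Qed.

Theorem proposition3p13 (K : fieldExtType rat) (n : nat) :
  totally_real K ->
  (* the action map M |-> (v |-> M v) is well defined: O_n(R) -> Aut(X(E^n_R)) *)
  [/\ forall M : 'M[K]_n, in_On M ->
        exists f : vertex K n -> vertex K n,
          (forall v, proj1_sig (f v) = M *m proj1_sig v) /\ is_simplicial_aut f,
  (* it is injective *)
      forall M1 M2 : 'M[K]_n, in_On M1 -> in_On M2 ->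
        (forall v : vertex K n, M1 *m proj1_sig v = M2 *m proj1_sig v) -> M1 = M2
  (* and surjective *)
    & forall f : vertex K n -> vertex K n, is_simplicial_aut f ->
        exists M : 'M[K]_n, in_On M /\
          forall v, proj1_sig (f v) = M *m proj1_sig v].
Proof.
move=> tr; split.
- exact: part1.
- by move=> M1 M2 _ _; apply: part2.
- exact: part3.
Qed.
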